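(* Let $A$ be a ring such that (1) every element of $A$ is nilpotent or regular, and (2) $\mathrm{Jac}_A 0\subseteq \mathrm{Nil}_A 0$. Let $I$ be an ideal of $A$ such that $\mathrm{Jac}_A I$ contains some regular element. Then the double negation of ''$I$ contains a regular element'' holds, i.e. it is not the case that $I$ contains no regular element.
   Context: All rings are commutative with identity. The setting is constructive mathematics: no law of excluded middle and no Zorn's lemma, so ''or'' is a constructive disjunction. An element is regular if it is a non-zero-divisor. For a ring $A$ and a subset $U\subseteq A$, $\langle U\rangle_A$ denotes the ideal generated by $U$. Define $\mathrm{Nil}_A U:=\{a\in A:\exists n\ge 0,\ a^n\in\langle U\rangle_A\}$ and $\mathrm{Jac}_A U:=\{a\in A:\forall b\in A,\ 1\in\langle U\cup\{1-ab\}\rangle_A\}$. *)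

(* Defs.v *)
From mathcomp Require Import all_boot all_algebra.
Set Implicit Arguments. Unset Strict Implicit. Unset Printing Implicit Defensive.
Import GRing.Theory.
Local Open Scope ring_scope.

(* Commutative rings with identity (the zero ring is allowed). *)
Section Defs.
Variable A : comPzRingType.

Definition regular (a : A) : Prop := forall b : A, a * b = 0 -> b = 0.

Definition nilpotent_el (a : A) : Prop := exists n : nat, a ^+ n = 0.

Definition is_ideal (I : A -> Prop) : Prop :=
  [/\ I 0, (forall x y, I x -> I y -> I (x + y)) & (forall a x, I x -> I (a * x))].

Definition gen_ideal (U : A -> Prop) (x : A) : Prop :=
  exists (n : nat) (c u : 'I_n -> A),
    (forall i, U (u i)) /\ x = \sum_(i < n) c i * u i.

Definition NilA (U : A -> Prop) (a : A) : Prop :=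
  exists n : nat, gen_ideal U (a ^+ n).

Definition JacA (U : A -> Prop) (a : A) : Prop :=
  forall b : A, gen_ideal (fun x => U x \/ x = 1 - a * b) 1.

Definition zero_set (x : A) : Prop := x = 0.
End Defs.

(* Main.v *)
Require Import Defs.
From mathcomp Require Import all_boot all_algebra.
Local Open Scope ring_scope.
Import GRing.Theory.

Lemma decomp (A : comPzRingType) (I : A -> Prop) (v : A) :
  is_ideal I -> forall x, gen_ideal (fun y => I y \/ y = v) x ->
  exists i d, I i /\ x = i + d * v.
Proof.
move=> [I0 ID IM] x [n [c [u [Hu ->]]]].
elim: n c u Hu => [|n IH] c u Hu.
  by exists 0, 0; rewrite big_ord0 mul0r addr0.
rewrite big_ord_recl /=.
have [i [d [Ii ->]]] := IH (fun k => c (lift ord0 k)) (fun k => u (lift ord0 k))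
   (fun k => Hu _).
case: (Hu ord0) => [Iu|->].
  exists (c ord0 * u ord0 + i), d; split; first by apply: ID => //; apply: IM.
  by rewrite addrA.
exists i, (c ord0 + d); split => //.
by rewrite mulrDl addrCA.
Qed.

Lemma nil_unit (A : comPzRingType) (i : A) (m : nat) :
  i ^+ m = 0 -> (1 - i) * \sum_(k < m) i ^+ k = 1.
Proof.
move=> Hm.
have := subrX1 i m. rewrite Hm sub0r => H.
by rewrite -opprB mulNr -H opprK.
Qed.

Lemma reg_nil (A : comPzRingType) (r : A) (n : nat) :
  regular r -> r ^+ n = 0 -> (1 : A) = 0.
Proof.
move=> Hr; elim: n => [|n IH]; first by rewrite expr0.
by rewrite exprS => /Hr.
Qed.

Theorem mainTheorem14 (A : comPzRingType) (I : A -> Prop) :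
  (forall a : A, nilpotent_el a \/ regular a) ->
  (forall a : A, JacA (@zero_set A) a -> NilA (@zero_set A) a) ->
  is_ideal I ->
  (exists r : A, JacA I r /\ regular r) ->
  ~ ~ (exists r : A, I r /\ regular r).
Proof.
move=> H1 H2 HI [r [Jr Rr]] Hno.
have Inil : forall x, I x -> nilpotent_el x.
  move=> x Ix; case: (H1 x) => // Rx; by case: Hno; exists x.
have J0 : JacA (@zero_set A) r.
  move=> b.
  have [i [d [Ii E]]] := @decomp A I _ HI _ (Jr b).
  have [m Hm] := Inil _ Ii.
  exists 1%N, (fun _ => (\sum_(k < m) i ^+ k) * d), (fun _ => 1 - r * b); split.
    by move=> _; right.
  rewrite big_ord1 -mulrA.
  have -> : d * (1 - r * b) = 1 - i by apply/esym/eqP; rewrite subr_eq [_ + i]addrC -E.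
  by rewrite mulrC nil_unit.
have [n [k [c [u [Hu Hs]]]]] := H2 r J0.
have rn0 : r ^+ n = 0.
  by rewrite Hs big1 // => j _; rewrite (Hu j) mulr0.
have one0 := @reg_nil A r n Rr rn0.
apply: Hno; exists 0; split; first by case: HI.
by move=> b _; rewrite -[b]mulr1 one0 mulr0.
Qed.
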